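(* Let $f:[0,1]\times\mathbb{R}\to\mathbb{R}$ be continuous with continuous partial derivative $f_x$ with respect to the second variable, suppose there exist positive constants $A,B$ with $A<1$ such that $|f(t,x)|\leqslant A|x|+B$ for all $t\in[0,1]$, $x\in\mathbb{R}$, suppose $\inf_{[0,1]\times\mathbb{R}}f_x>-1$, and let $v:[0,1]\to\mathbb{R}$ be continuous. For $N\in\mathbb{N}$, $N\geqslant2$, let $x_N:\{0,\dots,N\}\to\mathbb{R}$ be the unique solution of $$\Delta^2x(k-1)=\tfrac{1}{N^2}f\left(\tfrac kN,x(k)\right)+\tfrac{1}{N^2}v\left(\tfrac kN\right),\ k=1,\dots,N-1,\qquad x(0)=x(N)=0.$$ Then there exists a constant $M>0$ such that $|x_N(k)|\leqslant M$ for every $N\geqslant2$ and every $k\in\{0,\dots,N\}$.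
   Context: $\Delta x(k-1)=x(k)-x(k-1)$, $\Delta^2x(k-1)=x(k+1)-2x(k)+x(k-1)$. *)

(* Defs.v *)
From Stdlib Require Import Reals Lra Lia.
From Coquelicot Require Import Coquelicot.
Open Scope R_scope.

Definition strip (p : R * R) : Prop := 0 <= fst p <= 1.
Definition unit_int (t : R) : Prop := 0 <= t <= 1.

Definition cont_on_strip (g : R -> R -> R) : Prop :=
  forall t x, 0 <= t <= 1 ->
    filterlim (fun p : R * R => g (fst p) (snd p))
      (within strip (locally (t, x))) (locally (g t x)).

Definition cont_on_unit (v : R -> R) : Prop :=
  forall t, 0 <= t <= 1 ->
    filterlim v (within unit_int (locally t)) (locally (v t)).

Definition solves_bvp (f : R -> R -> R) (v : R -> R) (N : nat) (x : nat -> R) : Prop :=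
  (forall k : nat, (1 <= k)%nat -> (k <= N - 1)%nat ->
     x (S k) - 2 * x k + x (k - 1)%nat =
       / (INR N ^ 2) * f (INR k / INR N) (x k) + / (INR N ^ 2) * v (INR k / INR N))
  /\ x 0%nat = 0 /\ x N = 0.

(* Main.v *)
Require Import Defs.
From Stdlib Require Import Reals Lra Lia.
From Coquelicot Require Import Coquelicot.
Open Scope R_scope.

Definition clamp (t : R) := Rmax 0 (Rmin 1 t).

Lemma clamp_lip : forall t c, Rabs (clamp t - clamp c) <= Rabs (t - c).
Proof.
  intros t c; unfold clamp, Rmax, Rmin.
  repeat (destruct Rle_dec); unfold Rabs; repeat destruct Rcase_abs; lra.
Qed.

Lemma clamp_in : forall t, unit_int (clamp t).
Proof. intros t; unfold unit_int, clamp, Rmax, Rmin. repeat destruct Rle_dec; lra. Qed.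

Lemma clamp_id : forall t, 0 <= t <= 1 -> clamp t = t.
Proof. intros t H; unfold clamp, Rmax, Rmin. repeat destruct Rle_dec; lra. Qed.

Lemma v_bounded : forall v, cont_on_unit v -> exists V, 0 <= V /\ forall t, 0 <= t <= 1 -> Rabs (v t) <= V.
Proof.
  intros v Hv.
  set (g := fun t => v (clamp t)).
  assert (Hc : forall c, 0 <= c <= 1 -> continuity_pt g c).
  { intros c Hc0. apply continuity_pt_filterlim.
    unfold g. eapply filterlim_comp; [| apply (Hv (clamp c)); apply clamp_in].
    intros P [eps HP]. exists eps. intros y Hy. apply HP.
    - unfold ball in *; simpl in *. unfold AbsRing_ball, abs, minus, plus, opp in *; simpl in *.
      eapply Rle_lt_trans; [apply clamp_lip|]. exact Hy.
    - apply clamp_in. }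
  destruct (continuity_ab_maj g 0 1 ltac:(lra) Hc) as [a [Ha1 Ha2]].
  destruct (continuity_ab_min g 0 1 ltac:(lra) Hc) as [b [Hb1 Hb2]].
  exists (Rabs (g a) + Rabs (g b)). split. { pose proof (Rabs_pos (g a)); pose proof (Rabs_pos (g b)); lra. }
  intros t Ht. specialize (Ha1 t Ht). specialize (Hb1 t Ht). assert (g t = v t) by (unfold g; rewrite clamp_id; lra).
  unfold Rabs; repeat destruct Rcase_abs; lra.
Qed.

Lemma argmax : forall (y : nat -> R) n, exists k, (k <= n)%nat /\ forall j, (j <= n)%nat -> y j <= y k.
Proof.
  intros y n; induction n as [|n [k [Hk H]]].
  - exists 0%nat; split; [lia|]. intros j Hj. replace j with 0%nat by lia. lra.
  - destruct (Rle_dec (y (S n)) (y k)).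
    + exists k; split; [lia|]. intros j Hj. destruct (Nat.eq_dec j (S n)); [subst; lra| apply H; lia].
    + exists (S n); split; [lia|]. intros j Hj. destruct (Nat.eq_dec j (S n)); [subst; lra|].
      specialize (H j ltac:(lia)); lra.
Qed.

Lemma maxp : forall N (y : nat -> R),
  (forall k, (1 <= k)%nat -> (k <= N - 1)%nat -> y (S k) - 2 * y k + y (k - 1)%nat > 0) ->
  y 0%nat = 0 -> y N = 0 -> forall k, (k <= N)%nat -> y k <= 0.
Proof.
  intros N y H H0 HN k Hk.
  destruct (argmax y N) as [m [Hm Hmax]].
  assert (y m <= 0).
  { destruct (Nat.eq_dec m 0); [subst; lra|]. destruct (Nat.eq_dec m N); [subst; lra|].
    specialize (H m ltac:(lia) ltac:(lia)).
    pose proof (Hmax (S m) ltac:(lia)). pose proof (Hmax (m-1)%nat ltac:(lia)). lra. }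
  specialize (Hmax k Hk). lra.
Qed.

Theorem lemma12
  (f : R -> R -> R) (fx : R -> R -> R) (v : R -> R) (A B : R)
  (xs : nat -> nat -> R)
  (Hf : cont_on_strip f)
  (Hfx_der : forall t y, 0 <= t <= 1 -> is_derive (fun z => f t z) y (fx t y))
  (Hfx_cont : cont_on_strip fx)
  (HA : 0 < A) (HA1 : A < 1) (HB : 0 < B)
  (Hgrowth : forall t y, 0 <= t <= 1 -> Rabs (f t y) <= A * Rabs y + B)
  (Hinf : exists c, -1 < c /\ forall t y, 0 <= t <= 1 -> c <= fx t y)
  (Hv : cont_on_unit v)
  (Hsol : forall N : nat, (2 <= N)%nat -> solves_bvp f v N (xs N)) :
  exists M, 0 < M /\
    forall N k : nat, (2 <= N)%nat -> (k <= N)%nat -> Rabs (xs N k) <= M.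
Proof.
  destruct (v_bounded v Hv) as [V [HV0 HV]].
  set (C := B + V).
  exists ((C+1)/(8-A)). split. { apply Rdiv_lt_0_compat; unfold C; lra. }
  intros N k HN Hk.
  destruct (Hsol N HN) as [Heq [H0 HNe]].
  set (x := xs N) in *.
  destruct (argmax (fun j => Rabs (x j)) N) as [k0 [Hk0 Hmax]]. simpl in Hmax.
  set (m := Rabs (x k0)) in *.
  set (K := A*m + C + 1).
  set (n := INR N) in *.
  assert (Hn : 2 <= n). { unfold n. change 2 with (INR 2). apply le_INR. lia. }
  assert (Hm0 : 0 <= m) by apply Rabs_pos.
  set (w := fun j : nat => K * INR j * (n - INR j) / (2 * n^2)).
  assert (Hg : forall j, (1 <= j)%nat -> (j <= N - 1)%nat ->
            Rabs (f (INR j / n) (x j) + v (INR j / n)) <= A*m + C).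
  { intros j Hj1 Hj2.
    assert (Hjn : INR j <= n) by (unfold n; apply le_INR; lia).
    assert (Ht : 0 <= INR j / n <= 1).
    { split. apply Rdiv_le_0_compat; [apply pos_INR| lra].
      apply Rmult_le_reg_r with n; [lra|]. unfold Rdiv; rewrite Rmult_assoc, Rinv_l; lra. }
    eapply Rle_trans; [apply Rabs_triang|].
    pose proof (Hgrowth _ (x j) Ht). pose proof (HV _ Ht).
    pose proof (Hmax j ltac:(lia)). unfold C.
    assert (A * Rabs (x j) <= A * m) by (apply Rmult_le_compat_l; lra). lra. }
  assert (Hw2 : forall j, (1 <= j)%nat -> w (S j) - 2 * w j + w (j - 1)%nat = - (K * / n^2)).
  { intros j Hj. unfold w. rewrite S_INR, minus_INR by lia. change (INR 1) with 1. field. lra. }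
  assert (Hpos : forall j, (1 <= j)%nat -> (j <= N - 1)%nat ->
            0 < / n^2 * (f (INR j / n) (x j) + v (INR j / n) + K)).
  { intros j Hj1 Hj2. apply Rmult_lt_0_compat. apply Rinv_0_lt_compat; nra.
    pose proof (Hg j Hj1 Hj2) as Hgj. unfold K. unfold Rabs in Hgj; destruct Rcase_abs in Hgj; lra. }
  assert (Hw0 : w 0%nat = 0) by (unfold w; simpl; field; lra).
  assert (HwN : w N = 0) by (unfold w; fold n; replace (n - n) with 0 by ring; field; lra).
  assert (Hup : forall j, (j <= N)%nat -> x j - w j <= 0).
  { apply (maxp N (fun j => x j - w j)); [| rewrite H0, Hw0; ring | rewrite HNe, HwN; ring].
    intros j Hj1 Hj2. pose proof (Heq j Hj1 Hj2). pose proof (Hw2 j Hj1). pose proof (Hpos j Hj1 Hj2) as Hp.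
    rewrite !Rmult_plus_distr_l in Hp. lra. }
  assert (Hlo : forall j, (j <= N)%nat -> - x j - w j <= 0).
  { apply (maxp N (fun j => - x j - w j)); [| rewrite H0, Hw0; ring | rewrite HNe, HwN; ring].
    intros j Hj1 Hj2. pose proof (Heq j Hj1 Hj2). pose proof (Hw2 j Hj1).
    assert (Hq : 0 < / n^2 * (- (f (INR j / n) (x j) + v (INR j / n)) + K)).
    { apply Rmult_lt_0_compat. apply Rinv_0_lt_compat; nra.
      pose proof (Hg j Hj1 Hj2) as Hgj. unfold K. unfold Rabs in Hgj; destruct Rcase_abs in Hgj; lra. }
    rewrite !Rmult_plus_distr_l in Hq. lra. }
  assert (Hwb : forall j, w j <= K / 8).
  { intros j. unfold w. set (a := INR j).
    assert (E : K * a * (n - a) / (2 * n ^ 2) = K * (1/8 - (n - 2*a)^2 / (8 * n^2))) by (field; lra).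
    rewrite E. assert (0 <= (n - 2*a)^2 / (8 * n^2)).
    { apply Rdiv_le_0_compat; [apply pow2_ge_0| simpl; nra]. }
    assert (0 < K) by (unfold K, C; nra). nra. }
  assert (Hxb : forall j, (j <= N)%nat -> Rabs (x j) <= K / 8).
  { intros j Hj. pose proof (Hup j Hj). pose proof (Hlo j Hj). pose proof (Hwb j).
    unfold Rabs; destruct Rcase_abs; lra. }
  pose proof (Hxb k0 Hk0) as Hfin.
  eapply Rle_trans; [apply (Hmax k Hk)|].
  apply Rmult_le_reg_r with (8 - A); [lra|]. unfold Rdiv; rewrite Rmult_assoc, (Rinv_l (8 - A)) by lra.
  unfold K in Hfin. fold m in Hfin. lra.
Qed.
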